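(* Let $p$ be an odd prime, let $v$ be an integer with $1<v<p-1$, let $g\in\{2,\dots,p-1\}$ be a primitive root modulo $p$ with $\gcd(g,v)=1$, let $t\ge1$ and $b\in\{0,\dots,v-1\}$. Let $$\rho(b,t)=\#\{i\in[1,p-1]:\ g^i\,\%\,p\not\equiv b,\ g^{i+t+1}\,\%\,p\not\equiv b,\ g^{i+j}\,\%\,p\equiv b\ (1\le j\le t)\},$$ all congruences modulo $v$. Write $p=q\,g^{t+1}+r$ with $0\le r<g^{t+1}$. Then $$\left\lfloor\frac{g}{v}\right\rfloor^{t-1}\left\lfloor\frac{(v-1)g}{v}\right\rfloor^2\left\lfloor\frac{q}{v}\right\rfloor\ \le\ \rho(b,t)\ \le\ \left\lceil\frac{g}{v}\right\rceil^{t-1}\left\lceil\frac{(v-1)g}{v}\right\rceil^2\left\lceil\frac{q+1}{v}\right\rceil.$$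
   Context: $x\,\%\,p$ denotes the least nonnegative remainder of the integer $x$ modulo $p$. *)

(* Defs.v *)
From mathcomp Require Import all_boot.

Definition primitive_root_mod (p g : nat) : Prop :=
  coprime g p /\ forall k, 0 < k < p.-1 -> g ^ k %% p != 1.

Definition rho (p g v b t : nat) : nat :=
  #|[set i : 'I_p | (0 < i)
      && ((g ^ i %% p) %% v != b)
      && ((g ^ (i + t + 1) %% p) %% v != b)
      && [forall j : 'I_t.+1, (0 < j) ==> ((g ^ (i + j) %% p) %% v == b)]]|.

Definition ceil_div (a d : nat) : nat := (a + d.-1) %/ d.

(* Main.v *)
Require Import Defs.
From mathcomp Require Import all_boot zify.

Lemma mod_cancel k a b m : coprime k m ->
  (k * a == k * b %[mod m]) = (a == b %[mod m]).
Proof.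
move=> co.
wlog le: a b / b <= a.
  move=> W; case: (leqP b a) => h; first exact: W.
  by rewrite eq_sym W ?(ltnW h) // eq_sym.
rewrite !eqn_mod_dvd ?leq_mul2l ?le ?orbT // -mulnBr Gauss_dvdr //.
by rewrite coprime_sym.
Qed.

Lemma one_in_block k v c lo : 0 < v -> coprime k v ->
  \sum_(lo <= x < lo + v) (k * x == c %[mod v]) = 1.
Proof.
move=> v0 co.
rewrite -{1}[lo]add0n big_addn addKn big_mkord.
set f := fun i : 'I_v => Ordinal (ltn_pmod (k * (i + lo)) v0).
have finj : injective f.
  move=> i j /(congr1 val) /= /eqP; rewrite mod_cancel //.
  move=> h; apply/val_inj => /=.
  have : (i + lo) %% v == (j + lo) %% v by [].
  by rewrite eqn_modDr !modn_small // => /eqP.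
have [x0 hx0] : exists x0, f x0 = Ordinal (ltn_pmod c v0).
  have := inj_card_onto finj (leqnn _) (Ordinal (ltn_pmod c v0)).
  by case/codomP => x ->; exists x.
rewrite (bigD1 x0) //= big1 ?addn0.
  by have := congr1 val hx0 => /= h; rewrite h eqxx.
move=> i ne; apply/eqP; rewrite eqb0; apply/negP => h.
move/negP: ne; apply; apply/eqP/finj; rewrite hx0; apply/val_inj => /=.
exact: (eqP h).
Qed.


Lemma blocks k v c lo m : 0 < v -> coprime k v ->
  \sum_(lo <= x < lo + m * v) (k * x == c %[mod v]) = m.
Proof.
move=> v0 co; elim: m => [|m IH]; first by rewrite mul0n addn0 big_geq.
rewrite mulSn addnA (addnC lo) -addnA (big_cat_nat _ (n := lo + m * v)) ?leq_addr //=.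
  by rewrite IH [v + _]addnC one_in_block // addn1.
by rewrite leq_addl.
Qed.

Lemma short_block k v c lo s : 0 < v -> coprime k v -> s <= v ->
  \sum_(lo <= x < lo + s) (k * x == c %[mod v]) <= 1.
Proof.
move=> v0 co sv.
rewrite -(one_in_block k v c lo v0 co) (big_cat_nat _ (n := lo + s) (p := lo + v)) ?leq_addr //=.
by rewrite leq_add2l.
Qed.

Lemma interval_count k v c lo n : 0 < v -> coprime k v ->
  n %/ v <= \sum_(lo <= x < lo + n) (k * x == c %[mod v]) <= ceil_div n v.
Proof.
move=> v0 co.
have e : n = n %/ v * v + n %% v := divn_eq n v.
have hc : n %/ v + (0 < n %% v) <= ceil_div n v.
  rewrite /ceil_div leq_divRL //.
  have := ltn_pmod n v0; move: e; set Q := n %/ v; set R := n %% v.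
  clearbody Q R; case: (posnP R) => [->|Rp] /= E h; nia.
have -> : lo + n = lo + n %/ v * v + n %% v by rewrite {1}e addnA.
rewrite (big_cat_nat _ (n := lo + n %/ v * v)) ?leq_addr //=.
rewrite blocks // leq_addr /=.
have := short_block k v c (lo + n %/ v * v) (n %% v) v0 co (ltnW (ltn_pmod n v0)).
case: (posnP (n %% v)) => [->|sp] h.
  by rewrite addn0 big_geq // addn0; exact: leq_trans (leq_addr _ _) hc.
apply: (leq_trans (leq_add (leqnn _) h)); by rewrite sp in hc.
Qed.


Lemma sum_split (F : nat -> nat) m g :
  \sum_(D < m * g) F D = \sum_(D' < m) \sum_(d < g) F (D' * g + d).
Proof.
elim: m => [|m IH]; first by rewrite mul0n !big_ord0.
rewrite big_ord_recr /= -IH mulSnr -!(big_mkord xpredT).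
rewrite (big_cat_nat _ (n := m * g)) ?leq_addr //=.
congr (_ + _).
by rewrite -{1}[m * g]add0n big_addn addKn big_mkord; apply: eq_bigr => i _; rewrite addnC.
Qed.

Lemma digits_count g n (P : nat -> nat -> bool) : 0 < g ->
  \sum_(D < g ^ n) \prod_(k < n) P k ((D %/ g ^ k) %% g) =
  \prod_(k < n) \sum_(d < g) P k d.
Proof.
move=> g0; elim: n P => [|n IH] P.
  by rewrite expn0 big_ord1 !big_ord0.
rewrite expnSr (sum_split (fun D => \prod_(k < n.+1) P k ((D %/ g ^ k) %% g))) big_ord_recl.
have bS : forall k : nat, bump 0 k = k.+1 by [].
transitivity (\sum_(D' < g ^ n) ((\sum_(d < g) P 0 d) * \prod_(k < n) P k.+1 ((D' %/ g ^ k) %% g))).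
  apply: eq_bigr => D' _; rewrite big_distrl /=; apply: eq_bigr => d _.
  rewrite big_ord_recl expn0 divn1 modnMDl modn_small ?ltn_ord //; congr (_ * _).
  apply: eq_bigr => k _; rewrite lift0.
  by rewrite expnS divnMA divnMDl // (divn_small (ltn_ord d)) addn0.
rewrite -big_distrr /= (IH (fun k => P k.+1)).
by [].
Qed.


Definition digit g k D := (D %/ g ^ k) %% g.
Definition Cd g p v b d := (g * b == b + p * d %[mod v]).
Definition Pk g p v b t k d :=
  if (k == 0) || (k == t) then ~~ Cd g p v b d else Cd g p v b d.
Definition dc g p v b t D := all (fun k => Pk g p v b t k (digit g k D)) (iota 0 t.+1).
Definition Pb p g v b t x :=
  [&& x %% v != b, (g ^ t.+1 * x %% p) %% v != b &
      all (fun j => (g ^ j * x %% p) %% v == b) (iota 1 t)].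

Lemma L_e g p t x D j : 0 < g -> 0 < p -> g ^ t.+1 * x %/ p = D -> j <= t.+1 ->
  g ^ j * x %/ p = D %/ g ^ (t.+1 - j).
Proof.
move=> g0 p0 hD hj; rewrite -hD -divnMA.
have -> : g ^ t.+1 = g ^ (t.+1 - j) * g ^ j by rewrite -expnD subnK.
by rewrite -mulnA [p * _]mulnC divnMl ?expn_gt0 ?g0.
Qed.

Lemma L_y y p v b : b < v ->
  (y %% p %% v == b) = (y == b + p * (y %/ p) %[mod v]).
Proof.
move=> bv; rewrite {2}(divn_eq y p) [p * _]mulnC addnC eqn_modDr.
by rewrite (modn_small bv).
Qed.

Lemma L_rec g p v b A e d : (A == b + p * e %[mod v]) ->
  (g * A == b + p * (g * e + d) %[mod v]) = Cd g p v b d.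
Proof.
move=> /eqP h.
have -> : g * A = g * (b + p * e) %[mod v] by rewrite -modnMmr h modnMmr.
rewrite /Cd.
have -> : g * (b + p * e) = g * b + p * (g * e) by nia.
have -> : b + p * (g * e + d) = b + p * d + p * (g * e) by nia.
by rewrite eqn_modDr.
Qed.

Lemma L_dig g D k : D %/ g ^ k = g * (D %/ g ^ k.+1) + digit g k D.
Proof. by rewrite /digit expnSr divnMA mulnC -divn_eq. Qed.

Lemma L_step g p v b t x D j : j <= t ->
  (g ^ j * x == b + p * (D %/ g ^ (t.+1 - j)) %[mod v]) ->
  (g ^ j.+1 * x == b + p * (D %/ g ^ (t.+1 - j.+1)) %[mod v]) =
  Cd g p v b (digit g (t - j) D).
Proof.
move=> jt h.
have -> : t.+1 - j.+1 = t - j by [].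
have e1 : t.+1 - j = (t - j).+1 by rewrite subSn.
rewrite e1 in h.
by rewrite L_dig expnS -mulnA (L_rec g _ _ _ _ _ _ h).
Qed.

Lemma L_chain g p v b t x D :
  (g ^ 1 * x == b + p * (D %/ g ^ (t.+1 - 1)) %[mod v]) ->
  forall m, m < t ->
  all (fun j => g ^ j * x == b + p * (D %/ g ^ (t.+1 - j)) %[mod v]) (iota 1 m.+1) =
  all (fun j => Cd g p v b (digit g (t - j) D)) (iota 1 m).
Proof.
move=> h1; elim=> [|m IH] lt; first by rewrite /= h1.
have -> : m.+2 = m.+1 + 1 by rewrite addn1.
have e2 : m.+1 = m + 1 by rewrite addn1.
rewrite iotaD all_cat IH ?(ltnW lt) // {2}e2 iotaD all_cat /= !andbT.
case: (boolP (all _ (iota 1 m))) => //= hall.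
have := IH (ltnW lt); rewrite hall e2 iotaD all_cat /= andbT => /andP [_ hm].
by rewrite add1n -e2 L_step // ltnW.
Qed.

Lemma all_rev (f : pred nat) n :
  all f (iota 1 n) = all (fun j => f (n.+1 - j)) (iota 1 n).
Proof.
apply/allP/allP => H j; rewrite mem_iota => /andP [j1 jn].
  by apply: H; rewrite mem_iota; apply/andP; split; lia.
have := H (n.+1 - j); rewrite subKn; last by lia.
by apply; rewrite mem_iota; apply/andP; split; lia.
Qed.

Lemma core p g v b t x D : 0 < t -> b < v -> coprime g v -> 0 < g -> 0 < p ->
  D < g ^ t.+1 -> g ^ t.+1 * x %/ p = D ->
  Pb p g v b t x = dc g p v b t D && (g * x == b + p * (D %/ g ^ t) %[mod v]).
Proof.
move=> t0 bv co g0 p0 Dlt hD.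
set Ej := fun j => g ^ j * x == b + p * (D %/ g ^ (t.+1 - j)) %[mod v].
have Ey : forall j, j <= t.+1 -> ((g ^ j * x %% p) %% v == b) = Ej j.
  by move=> j hj; rewrite L_y // (L_e _ _ _ _ _ _ g0 p0 hD hj).
have E1 : Ej 1 = (g * x == b + p * (D %/ g ^ t) %[mod v]) by rewrite /Ej expn1 subn1.
rewrite /Pb Ey // -E1.
rewrite (eq_in_all (a2 := Ej)); last first.
  by move=> j; rewrite mem_iota => /andP [_ hj]; apply: Ey; lia.
have et : t = t.-1 + 1 by lia.
have hiota : iota 1 t = iota 1 t.-1 ++ [:: t] by rewrite {1}et iotaD; congr (_ ++ _); rewrite /= add1n prednK.
have dt : digit g t D = D %/ g ^ t.
  rewrite /digit modn_small // ltn_divLR; last by rewrite expn_gt0 g0.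
  by rewrite -expnS.
have d0 : digit g 0 D = D %% g by rewrite /digit expn0 divn1.
have hdc : dc g p v b t D = [&& ~~ Cd g p v b (digit g 0 D),
     all (fun j => Cd g p v b (digit g (t - j) D)) (iota 1 t.-1) &
     ~~ Cd g p v b (D %/ g ^ t)].
  rewrite /dc /= hiota all_cat /= andbT.
  congr [&& _, _ & _].
    rewrite all_rev; apply: eq_in_all => j; rewrite mem_iota => /andP [j1 jn].
    rewrite (prednK t0) /Pk.
    have jt : j < t by move: jn; rewrite add1n prednK.
    have h2 : t - j < t by rewrite ltn_subrL j1 t0.
    by rewrite subn_eq0 leqNgt jt /= (ltn_eqF h2).
  by rewrite /Pk eqxx orbT dt.
have tlt : t.-1 < t by rewrite -{2}(prednK t0).
rewrite hdc.
case: (boolP (Ej 1)) => h1; last first.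
  have -> : iota 1 t = 1 :: iota 2 t.-1 by rewrite -{1}(prednK t0).
  by rewrite /= (negbTE h1) !andbF.
have hc := L_chain _ _ _ _ _ _ _ h1 _ tlt; rewrite (prednK t0) in hc.
change (all Ej (iota 1 t) = all (fun j : nat => Cd g p v b (digit g (t - j) D)) (iota 1 t.-1)) in hc.
rewrite andbT hc.
have hx : (x %% v != b) = ~~ Cd g p v b (D %/ g ^ t).
  have -> : (x %% v != b) = ~~ (x == b %[mod v]) by rewrite (modn_small bv).
  rewrite -(mod_cancel g x b v co) /Cd; congr (~~ _).
  rewrite E1 in h1; rewrite (eqP h1); exact: eq_sym.
rewrite hx.
case: (boolP (all _ (iota 1 t.-1))) => hall; last by rewrite !andbF.
have hEt : Ej t.
  rewrite -hc in hall; move/allP: hall; apply; rewrite mem_iota t0 /= add1n ltnSn.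
  by [].
have := L_step g p v b t x D t (leqnn t) hEt.
move=> hE.
change (Ej t.+1 = Cd g p v b (digit g (t - t) D)) in hE.
rewrite subnn in hE.
by rewrite hE andbT andbC.
Qed.


Lemma forall_all t (P : nat -> bool) :
  [forall j : 'I_t.+1, (0 < j) ==> P j] = all P (iota 1 t).
Proof.
apply/forallP/allP => H.
  move=> j; rewrite mem_iota add1n => /andP [j1 jt].
  by have := H (Ordinal jt); rewrite /= j1.
move=> j; apply/implyP => j0; apply: H; rewrite mem_iota add1n j0.
exact: ltn_ord.
Qed.

Lemma rho_eq p g v b t : prime p -> primitive_root_mod p g -> 0 < t -> b < v ->
  rho p g v b t = #|[set x : 'I_p | Pb p g v b t x]|.
Proof.
move=> pp [cop prim] t0 bv.
have p0 : 0 < p := prime_gt0 pp.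
have p1 : 1 < p := prime_gt1 pp.
pose f := fun i : 'I_p => Ordinal (ltn_pmod (g ^ i) p0).
pose A := [set i : 'I_p | 0 < i].
have finj : {in A &, injective f}.
  have key : forall i j : 'I_p, 0 < i -> i < j -> g ^ i %% p = g ^ j %% p -> False.
    move=> i j i0 ij h.
    have e : g ^ j = g ^ i * g ^ (j - i) by rewrite -expnD subnKC // ltnW.
    have : g ^ i * g ^ (j - i) == g ^ i * 1 %[mod p] by rewrite -e muln1 h.
    rewrite mod_cancel; last by rewrite coprimeXl.
    rewrite (modn_small p1) => h1.
    have hk : 0 < j - i < p.-1.
      apply/andP; split; first by rewrite subn_gt0.
      apply: (@leq_trans j); first by rewrite ltn_subrL i0 (leq_ltn_trans (leq0n i) ij).
      by rewrite -ltnS prednK.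
    by move: (prim _ hk); rewrite h1.
  move=> i j; rewrite !inE => hi hj /(congr1 val) /= h.
  apply/val_inj; case: (ltngtP i j) => // hij.
    by case: (key _ _ hi hij h).
  by case: (key _ _ hj hij (esym h)).
have imA : f @: A = A.
  apply/eqP; rewrite eqEcard card_in_imset // leqnn andbT.
  apply/subsetP => x /imsetP [i _ ->]; rewrite inE /= lt0n.
  apply/negP => /eqP /eqP; rewrite -/(dvdn p (g ^ i)) Euclid_dvdX //.
  by move=> /andP [pg _]; move: cop; rewrite coprime_sym prime_coprime // pg.
have hS : rho p g v b t = #|[set i : 'I_p | (0 < i) && Pb p g v b t (f i)]|.
  rewrite /rho; apply: eq_card => k; rewrite !inE /Pb /= (forall_all t (fun j => g ^ (k + j) %% p %% v == b)).
  have e1 : forall j, g ^ j * (g ^ k %% p) %% p = g ^ (k + j) %% p.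
    by move=> j; rewrite modnMmr -expnD addnC.
  have -> : all (fun j => (g ^ j * (g ^ k %% p) %% p) %% v == b) (iota 1 t) =
            all (fun j => g ^ (k + j) %% p %% v == b) (iota 1 t).
    by apply: eq_all => j; rewrite e1.
  by rewrite e1 -addnA addn1 !andbA.
rewrite hS -(card_in_imset (f := f)); last first.
  by move=> x y; rewrite !inE => /andP [hx _] /andP [hy _]; apply: finj; rewrite inE.
apply: eq_card => x; rewrite [in RHS]inE; apply/imsetP/idP.
  by case=> i; rewrite inE => /andP [_ hi] ->.
move=> hx.
have : x \in A.
  rewrite inE lt0n; apply/negP => /eqP x0; move: hx; rewrite /Pb x0 mod0n.
  have -> : iota 1 t = 1 :: iota 2 t.-1 by rewrite -{1}(prednK t0).
  by rewrite /= !muln0 !mod0n => /and4P [/negP nb _ eb _]; apply: nb.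
rewrite -imA => /imsetP [i hi e]; exists i => //.
by rewrite inE -e hx; rewrite inE in hi; rewrite hi.
Qed.


Definition lo G p D := (p * D + G.-1) %/ G.

Lemma lo_le G p D x : 0 < G -> (lo G p D <= x) = (p * D <= G * x).
Proof.
move=> G0; rewrite /lo leqNgt leq_divRL //.
by apply/negP/idP => H; lia.
Qed.

Lemma lt_lo G p D x : 0 < G -> (x < lo G p D.+1) = (G * x < p * D.+1).
Proof.
move=> G0; rewrite /lo leq_divRL //.
by apply/idP/idP => H; lia.
Qed.

Lemma inI G p D x : 0 < G -> 0 < p -> lo G p D <= x < lo G p D.+1 -> G * x %/ p = D.
Proof.
move=> G0 p0 /andP [h1 h2]; rewrite lo_le // in h1; rewrite lt_lo // in h2.
apply/eqP; rewrite eqn_leq leq_divRL // -ltnS ltn_divLR //.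
apply/andP; split; lia.
Qed.

Lemma lo_mono G p m n : m <= n -> lo G p m <= lo G p n.
Proof. by move=> mn; rewrite /lo leq_div2r // leq_add2r leq_mul2l mn orbT. Qed.

Lemma lo0 G p : 0 < G -> lo G p 0 = 0.
Proof. by move=> G0; rewrite /lo muln0 add0n divn_small // prednK. Qed.

Lemma loG G p : 0 < G -> lo G p G = p.
Proof. by move=> G0; rewrite /lo divnMDl // divn_small ?addn0 // prednK. Qed.

Lemma part (F : nat -> nat) G p n : 0 < G ->
  \sum_(0 <= x < lo G p n) F x = \sum_(D < n) \sum_(lo G p D <= x < lo G p D.+1) F x.
Proof.
move=> G0; elim: n => [|n IH]; first by rewrite lo0 // big_geq // big_ord0.
rewrite big_ord_recr /= -IH (big_cat_nat _ (n := lo G p n)) //.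
exact: lo_mono.
Qed.

Lemma lo_step G p q r D : 0 < G -> p = q * G + r -> r < G ->
  q + lo G p D <= lo G p D.+1 <= q.+1 + lo G p D.
Proof.
move=> G0 hp rG.
have -> : lo G p D.+1 = q + (p * D + G.-1 + r) %/ G.
  rewrite /lo -divnMDl //; congr (_ %/ _); rewrite mulnS; lia.
apply/andP; split.
  by rewrite leq_add2l /lo leq_div2r // leq_addr.
have -> : q.+1 + lo G p D = q + (1 + lo G p D) by lia.
rewrite leq_add2l /lo.
have -> : 1 + (p * D + G.-1) %/ G = (1 * G + (p * D + G.-1)) %/ G by rewrite divnMDl.
by rewrite leq_div2r // mul1n [G + _]addnC leq_add2l ltnW.
Qed.


Lemma all_prod n (f : nat -> bool) :
  (all f (iota 0 n) : nat) = \prod_(k < n) (f k : nat).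
Proof.
elim: n => [|n IH]; first by rewrite big_ord0.
rewrite big_ord_recr -IH.
have -> : iota 0 n.+1 = iota 0 n ++ [:: n] by rewrite -addn1 iotaD.
by rewrite all_cat /= andbT mulnb.
Qed.

Lemma dc_sum g p v b t : 0 < g -> 0 < t ->
  \sum_(D < g ^ t.+1) (dc g p v b t D : nat) =
  (\sum_(d < g) (~~ Cd g p v b d : nat)) ^ 2 * (\sum_(d < g) (Cd g p v b d : nat)) ^ t.-1.
Proof.
move=> g0; case: t => [//|t] _.
under eq_bigr => D _ do rewrite /dc all_prod.
rewrite (digits_count g t.+2 (fun k d => Pk g p v b t.+1 k d)) //.
rewrite big_ord_recl big_ord_recr /=.
have -> : \prod_(i < t) \sum_(d < g) (Pk g p v b t.+1 (lift ord0 (widen_ord (leqnSn t) i)) d : nat) =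
          \prod_(i < t) \sum_(d < g) (Cd g p v b d : nat).
  apply: eq_bigr => i _; apply: eq_bigr => d _; rewrite /Pk lift0 /=.
  by rewrite eqSS (ltn_eqF (ltn_ord i)).
rewrite prod_nat_const card_ord.
have -> : \sum_(d < g) (Pk g p v b t.+1 (lift ord0 (@ord_max t)) d : nat) = \sum_(d < g) (~~ Cd g p v b d : nat).
  by apply: eq_bigr => d _; rewrite /Pk lift0 /= eqxx.
have -> : \sum_(d < g) (Pk g p v b t.+1 (@ord0 t.+1) d : nat) = \sum_(d < g) (~~ Cd g p v b d : nat).
  by [].
by rewrite [_ ^ t * _]mulnC mulnA.
Qed.


Lemma div_eq a v Q R : R < v -> a = Q * v + R -> a %/ v = Q.
Proof.
move=> Rv ->; have v0 : 0 < v by apply: leq_ltn_trans Rv.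
by rewrite divnMDl // divn_small ?addn0.
Qed.

Lemma idents g v : 0 < v ->
  (v.-1 * g) %/ v + ceil_div g v = g /\ ceil_div (v.-1 * g) v + g %/ v = g.
Proof.
case: v => [//|w] _; rewrite /ceil_div /=.
have e := divn_eq g w.+1; have sl := ltn_pmod g (ltn0Sn w).
move: e sl; set k := g %/ w.+1; set s := g %% w.+1; clearbody k s => e sl.
rewrite e; case: s e sl => [|s'] e sl.
  rewrite (div_eq _ _ (w * k) (0)) //; last by lia.
  rewrite (div_eq _ _ (k) (w)) //; last by lia.
  rewrite (div_eq _ _ (w * k) (w)) //; last by lia.
  split; lia.
have [u hu] : exists u, w = s' + u by exists (w - s'); lia.
rewrite (div_eq _ _ (w * k + s') (u.+1 - 1)) //; last 2 first.
  by lia.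
  by lia.
rewrite (div_eq _ _ (k.+1) (s')) //; last 2 first.
  by lia.
  by lia.
rewrite (div_eq _ _ (w * k + s'.+1) (u - 1)) //; last 2 first.
  by lia.
  by lia.
split; lia.
Qed.


Lemma AB_bounds p g v b : prime p -> 1 < v -> v < p -> 0 < g ->
  let B := \sum_(d < g) (Cd g p v b d : nat) in
  let A := \sum_(d < g) (~~ Cd g p v b d : nat) in
  [/\ g %/ v <= B, B <= ceil_div g v, (v.-1 * g) %/ v <= A & A <= ceil_div (v.-1 * g) v].
Proof.
move=> pp v1 vp g0 B A.
have v0 : 0 < v by apply: ltnW.
have copv : coprime p v by rewrite prime_coprime // gtnNdvd.
have hC : forall d, Cd g p v b d = (p * d == g.-1 * b %[mod v]).
  move=> d; rewrite /Cd -{1}(prednK g0) mulSn eqn_modDl; exact: eq_sym.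
have hB : g %/ v <= B <= ceil_div g v.
  rewrite /B; under eq_bigr => d _ do rewrite hC.
  have := interval_count p v (g.-1 * b) 0 g v0 copv.
  by rewrite add0n big_mkord.
have hAB : A + B = g.
  rewrite /A /B -big_split /=.
  rewrite (eq_bigr (fun _ => 1)); last by move=> d _; case: (Cd _ _ _ _ _).
  by rewrite sum_nat_const card_ord muln1.
have [i1 i2] := idents g v v0.
case/andP: hB => h1 h2.
split => //; lia.
Qed.


Lemma leq_expe m n e : m <= n -> m ^ e <= n ^ e.
Proof. by move=> mn; case: e => [//|e]; rewrite leq_exp2r. Qed.

Theorem theorem10 (p v g t b q r : nat) :
  prime p -> odd p ->
  1 < v -> v < p.-1 ->
  2 <= g <= p.-1 -> primitive_root_mod p g -> coprime g v ->
  1 <= t -> b < v ->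
  p = q * g ^ t.+1 + r -> r < g ^ t.+1 ->
  (g %/ v) ^ t.-1 * ((v.-1 * g) %/ v) ^ 2 * (q %/ v) <= rho p g v b t /\
  rho p g v b t <=
    (ceil_div g v) ^ t.-1 * (ceil_div (v.-1 * g) v) ^ 2 * ceil_div q.+1 v.
Proof.
move=> pp _ v1 vp /andP [g2 gp] prim cogv t0 bv hp hr.
have p0 : 0 < p := prime_gt0 pp.
have g0 : 0 < g by apply: leq_trans g2.
have v0 : 0 < v by apply: ltnW.
have vltp : v < p by apply: (leq_trans vp); rewrite leq_pred.
set G := g ^ t.+1.
have G0 : 0 < G by rewrite expn_gt0 g0.
pose inner D := \sum_(lo G p D <= x < lo G p D.+1) (g * x == b + p * (D %/ g ^ t) %[mod v]).
have main : rho p g v b t = \sum_(D < G) dc g p v b t D * inner D.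
  rewrite rho_eq //.
  have -> : #|[set x : 'I_p | Pb p g v b t x]| = \sum_(0 <= x < p) (Pb p g v b t x : nat).
    rewrite -sum1_card big_mkcond /= big_mkord; apply: eq_bigr => i _.
    by rewrite inE; case: (Pb _ _ _ _ _ _).
  rewrite -{1}(loG G p G0) part //; apply: eq_bigr => D _.
  rewrite /inner big_distrr /=; apply: eq_big_nat => x hx.
  by rewrite (core p g v b t x D t0 bv cogv g0 p0 (ltn_ord D) (inI G p D x G0 p0 hx)) mulnb.
have hin : forall D : 'I_G, q %/ v <= inner D <= ceil_div q.+1 v.
  move=> D; have /andP [l1 l2] := lo_step G p q r D G0 hp hr.
  have hle := lo_mono G p _ _ (leqnSn D).
  have := interval_count g v (b + p * (D %/ g ^ t)) (lo G p D) (lo G p D.+1 - lo G p D) v0 cogv.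
  rewrite subnKC // -/(inner D) => /andP [i1 i2].
  apply/andP; split.
    apply: leq_trans i1; apply: leq_div2r; lia.
  apply: (leq_trans i2); apply: leq_div2r; rewrite leq_add2r; lia.
have [hB1 hB2 hA1 hA2] := AB_bounds p g v b pp v1 vltp g0.
have hs := dc_sum g p v b t g0 t0.
split.
  rewrite main.
  apply: (@leq_trans (\sum_(D < G) dc g p v b t D * (q %/ v))).
    rewrite -big_distrl /= hs [_ ^ 2 * _]mulnC leq_mul2r; apply/orP; right.
    by apply: leq_mul; apply: leq_expe.
  apply: leq_sum => D _; rewrite leq_mul2l; apply/orP; right.
  by case/andP: (hin D).
rewrite main.
apply: (@leq_trans (\sum_(D < G) dc g p v b t D * ceil_div q.+1 v)).
  apply: leq_sum => D _; rewrite leq_mul2l; apply/orP; right.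
  by case/andP: (hin D).
rewrite -big_distrl /= hs [_ ^ 2 * _]mulnC leq_mul2r; apply/orP; right.
by apply: leq_mul; apply: leq_expe.
Qed.
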